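(* Let $G=(V,E,\gamma,c)$ be a typed DAG task with $M_s\ge1$ cores of each type $s\in S$, and let $\pi=(\tau_1,\dots,\tau_k)$ be a complete path of $G$. Define $\delta(\tau_i,s)$, $\varphi(\tau_i)$ and $\mathcal{R}(\tau_i)$ as in the context. Then \[ \mathcal{R}(\tau_k)=len(\pi)+\sum_{s\in S}\sum_{v\in\mathrm{ivs}(\pi,s)}\frac{c(v)}{M_s}. \]
   Context: A typed DAG task is $G=(V,E,\gamma,c)$ where $(V,E)$ is a finite directed acyclic graph with a unique source $v_{src}$ and a unique sink $v_{snk}$, $S$ is a finite set of core types, $\gamma:V\to S$ gives the type of each vertex, and $c:V\to\mathbb{R}_{\ge0}$ gives the WCET of each vertex. A complete path is a path from $v_{src}$ to $v_{snk}$; $len(\pi)=\sum_{u\in\pi}c(u)$. $\mathrm{ans}(u)$, $\mathrm{des}(u)$ denote ancestors and descendants of $u$. For $v\in V$, $\mathrm{par}(v)=\{u\in V: u\ne v,\ \gamma(u)=\gamma(v),\ u\notin \mathrm{ans}(v)\cup\mathrm{des}(v)\}$, and $\mathrm{par}(\bot)=\emptyset$. For a path $\pi=(\tau_1,\dots,\tau_k)$ and $s\in S$, $\mathrm{ivs}(\pi,s)=\bigcup_{i:\gamma(\tau_i)=s}\mathrm{par}(\tau_i)$. For $s\in S$: $\delta(\tau_i,s)=\tau_i$ if $\gamma(\tau_i)=s$; $\delta(\tau_1,s)=\bot$ if $\gamma(\tau_1)\ne s$; $\delta(\tau_i,s)=\delta(\tau_{i-1},s)$ if $\gamma(\tau_i)\ne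 s$ and $2\le i\le k$ (so $\delta(\tau_i,s)$ is the last vertex of type $s$ among $\tau_1,\dots,\tau_i$, or $\bot$ if none). For $2\le i\le k$, $\varphi(\tau_i)=\mathrm{par}(\tau_i)\setminus\mathrm{par}(\delta(\tau_{i-1},\gamma(\tau_i)))$. Finally $\mathcal{R}(\tau_1)=c(\tau_1)$ and, for $2\le i\le k$, $\mathcal{R}(\tau_i)=\mathcal{R}(\tau_{i-1})+c(\tau_i)+\sum_{v\in\varphi(\tau_i)}c(v)/M_{\gamma(\tau_i)}$. *)

(* Defs.v *)
From mathcomp Require Import all_boot all_order all_algebra.
Set Implicit Arguments. Unset Strict Implicit. Unset Printing Implicit Defensive.
Import Order.TTheory GRing.Theory Num.Theory.
Local Open Scope ring_scope.

Section TypedDAG.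
Variables (R : realFieldType) (V S : finType) (E : rel V)
          (gamma : V -> S) (c : V -> R) (M : S -> nat).

Definition acyclic : Prop := forall u v, E u v -> ~~ connect E v u.

Definition is_source (v : V) : bool := [forall u, ~~ E u v].
Definition is_sink (v : V) : bool := [forall u, ~~ E v u].

Definition ans (u : V) : {set V} := [set w | (w != u) && connect E w u].
Definition des (u : V) : {set V} := [set w | (w != u) && connect E u w].

Definition par (v : V) : {set V} :=
  [set u | [&& u != v, gamma u == gamma v & u \notin ans v :|: des v]].

(* par on V ∪ {⊥}, ⊥ encoded as None *)
Definition par_opt (o : option V) : {set V} :=
  if o is Some v then par v else set0.

Definition ivs (p : seq V) (s : S) : {set V} :=
  \bigcup_(x <- p | gamma x == s) par x.

(* last vertex of type s in the sequence q, or ⊥ (None).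
   delta(tau_i, s) = last_of_type (take i p) s. *)
Definition last_of_type (q : seq V) (s : S) : option V :=
  foldl (fun acc v => if gamma v == s then Some v else acc) None q.

Definition len (p : seq V) : R := \sum_(u <- p) c u.

Definition complete_path (src snk : V) (p : seq V) : Prop :=
  exists rest, p = src :: rest /\ path E src rest /\ last src rest = snk.

Section Path.
Variables (x0 : V) (p : seq V).
(* tau_i (1-based) is nth x0 p (i-1) *)
(* phi(tau_{i'+1}) for 1 <= i' : par(tau_{i'+1}) \ par(delta(tau_{i'}, gamma tau_{i'+1})) *)
Definition phi (i' : nat) : {set V} :=
  par (nth x0 p i') :\: par_opt (last_of_type (take i' p) (gamma (nth x0 p i'))).

(* Rt i = R(tau_i) for 1 <= i <= size p *)
Fixpoint Rt (i : nat) : R :=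
  match i with
  | 0 => 0
  | i'.+1 =>
      if i' is 0 then c (nth x0 p 0)
      else Rt i' + c (nth x0 p i')
           + \sum_(v in phi i') c v / (M (gamma (nth x0 p i')))%:R
  end.
End Path.

End TypedDAG.

(* Main.v *)
Require Import Defs.
From mathcomp Require Import all_boot all_order all_algebra.
Import Order.TTheory GRing.Theory Num.Theory.
Local Open Scope ring_scope.

Section Aux.
Variables (V S : finType) (E : rel V) (gamma : V -> S).

Lemma lot_rcons q x s : last_of_type gamma (rcons q x) s =
  if gamma x == s then Some x else last_of_type gamma q s.
Proof. by rewrite /last_of_type foldl_rcons. Qed.

Lemma lot_Some q s z : last_of_type gamma q s = Some z -> z \in q /\ gamma z = s.
Proof.
elim/last_ind: q => [|q w IH] //=.
rewrite lot_rcons mem_rcons in_cons; case: eqP => [Hw [<-]|_ /IH [H1 H2]].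
  by rewrite eqxx.
by rewrite H1 orbT.
Qed.

Lemma lot_None q s y : last_of_type gamma q s = None -> y \in q -> gamma y != s.
Proof.
elim/last_ind: q => [|q w IH] //=.
rewrite lot_rcons mem_rcons in_cons; case: eqP => [//|Hw /IH H].
by case/orP => [/eqP->|/H]; [apply/eqP|].
Qed.

Lemma lot_conn q x s y z : pairwise (connect E) (rcons q x) -> y \in q ->
  gamma y = s -> last_of_type gamma q s = Some z -> connect E y z /\ connect E z x.
Proof.
elim/last_ind: q x y => [|q w IH] x y //=.
rewrite -cats1 pairwise_cat => /and3P [Har Hpw _].
have Hx : forall u, u \in rcons q w -> connect E u x.
  by move=> u Hu; move/allrelP: Har; apply => //; rewrite mem_seq1.
rewrite lot_rcons mem_rcons in_cons.
have [Hw|Hw] := eqVneq (gamma w) s => [H _ [<-]|H Hy Hl].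
  split; last by apply: Hx; rewrite mem_rcons mem_head.
  move: Hpw; rewrite -cats1 pairwise_cat => /and3P [Ha _ _].
  case/orP: H => [/eqP->|Hy0]; first exact: connect0.
  by move/allrelP: Ha; apply => //; rewrite mem_seq1.
case/orP: H => [/eqP Hyw|Hyq]; first by move: Hw; rewrite -Hy Hyw eqxx.
have [H1 H2] := IH w y Hpw Hyq Hy Hl.
split => //; apply: connect_trans H2 _; apply: Hx; by rewrite mem_rcons mem_head.
Qed.

Lemma par_mid y z x v : connect E y z -> connect E z x -> gamma y = gamma z ->
  v \in par E gamma y -> v \in par E gamma x -> v \in par E gamma z.
Proof.
move=> Hyz Hzx Hg; rewrite !inE -Hg.
case/and3P => Hvy /eqP Hgv; rewrite negb_or => /andP [Hay Hdy].
case/and3P => Hvx _; rewrite negb_or => /andP [Hax _].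
rewrite Hgv eqxx /=.

have Hvz : v != z.
  apply/eqP => Evz; subst v; move: Hdy; rewrite Hvy Hyz //.
rewrite Hvz /= negb_or; apply/andP; split.
  apply/negP => Hc; move: Hax; rewrite Hvx (connect_trans Hc Hzx) //.
apply/negP => Hc; move: Hdy; rewrite Hvy (connect_trans Hyz Hc) //.
Qed.

Lemma all_from_src src : acyclic E -> [set v | is_source E v] = [set src] ->
  forall v, connect E src v.
Proof.
move=> Hac Hsrc v.
case: (@arg_minnP _ v (fun u => connect E u v) (fun u => #|[set w | connect E w u]|)) => //.
move=> u Huv Hmin.
have Hs : is_source E u.
  apply/forallP => w; apply/negP => Hwu.
  have := Hmin w (connect_trans (connect1 Hwu) Huv).
  apply/negP; rewrite -ltnNge; apply: proper_card.
  apply/properP; split.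
    by apply/subsetP => t; rewrite !inE => Ht; apply: connect_trans Ht (connect1 Hwu).
  exists u; first by rewrite inE connect0.
  by rewrite inE; apply: Hac.
have : u \in [set v | is_source E v] by rewrite inE.
by rewrite Hsrc inE => /eqP <-.
Qed.

Lemma par_src src : acyclic E -> [set v | is_source E v] = [set src] ->
  par E gamma src = set0.
Proof.
move=> Hac Hsrc; apply/setP => v; rewrite !inE.
case: eqVneq => //= Hv; rewrite (@all_from_src src Hac Hsrc v) /=.
by rewrite orbT andbF.
Qed.

Lemma ivs_P q s v : (v \in ivs E gamma q s) = has (fun y => (gamma y == s) && (v \in par E gamma y)) q.
Proof.
elim: q => [|y q IH]; first by rewrite /ivs big_nil inE.
rewrite /ivs big_cons /=; case: eqP => _ /=; last by rewrite -IH.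
by rewrite in_setU -IH.
Qed.

End Aux.
Arguments lot_Some {V S gamma q s z}.
Arguments lot_None {V S gamma q s y}.
Arguments lot_conn {V S E gamma q x s y z}.
Arguments par_mid {V S E gamma y z x v}.
Arguments par_src {V S E} gamma {src}.
Arguments ivs_P {V S E gamma}.


Lemma ivs_rcons (V S : finType) (E : rel V) (gamma : V -> S) q x s :
  ivs E gamma (rcons q x) s =
  ivs E gamma q s :|: (if gamma x == s then par E gamma x else set0).
Proof.
apply/setP => v; rewrite in_setU !ivs_P -cats1 has_cat /= orbF.
by case: eqP => //=; rewrite in_set0 orbF.
Qed.

Lemma step (R : realFieldType) (V S : finType) (E : rel V) (gamma : V -> S)
  (F : S -> V -> R) q x :
  (forall v y, y \in q -> gamma y = gamma x -> v \in par E gamma y ->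
     v \in par E gamma x -> v \in par_opt E gamma (last_of_type gamma q (gamma x))) ->
  \sum_(s : S) \sum_(v in ivs E gamma (rcons q x) s) F s v =
  \sum_(s : S) \sum_(v in ivs E gamma q s) F s v +
  \sum_(v in par E gamma x :\: par_opt E gamma (last_of_type gamma q (gamma x))) F (gamma x) v.
Proof.
move=> Hkey.
set phi := _ :\: _.
have per : forall s, \sum_(v in ivs E gamma (rcons q x) s) F s v =
   \sum_(v in ivs E gamma q s) F s v + (if gamma x == s then \sum_(v in phi) F s v else 0).
  move=> s; rewrite ivs_rcons; have [<-|_] := eqVneq (gamma x) s; last by rewrite setU0 addr0.
  have -> : ivs E gamma q (gamma x) :|: par E gamma x = ivs E gamma q (gamma x) :|: phi.
    apply/setP => v; rewrite !in_setU /phi in_setD.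
    case Hv: (v \in ivs E gamma q (gamma x)) => //=.
    case Hp: (v \in par E gamma x); rewrite ?andbF ?andbT //=.
    apply/esym/negP => Ho; move: Hv; rewrite ivs_P.
    case Hl: (last_of_type gamma q (gamma x)) Ho => [z|] /= Hz; last by rewrite in_set0 in Hz.
    have [Hzq Hgz] := lot_Some Hl.
    by move/negbT/hasPn/(_ z Hzq); rewrite Hgz eqxx Hz.
  rewrite (eq_bigl (fun v => v \in [predU (ivs E gamma q (gamma x)) & phi])); last first.
    by move=> v; rewrite in_setU.
  rewrite bigU //; apply/pred0P => v /=; apply/negP => /andP [].
  rewrite ivs_P => /hasP [y Hyq /andP [/eqP Hgy Hvy]].
  rewrite /phi in_setD => /andP [Hn Hvx].
  by move: Hn; rewrite (Hkey v y Hyq Hgy Hvy Hvx).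
rewrite (eq_bigr _ (fun s _ => per s)) big_split /=; congr (_ + _).
rewrite -big_mkcond /= (big_pred1 (gamma x)) // => s /=; exact: eq_sym.
Qed.

Theorem lemma3 (R : realFieldType) (V S : finType) (E : rel V)
    (gamma : V -> S) (c : V -> R) (M : S -> nat) (src snk : V) (p : seq V) :
  acyclic E ->
  [set v | is_source E v] = [set src] ->
  [set v | is_sink E v] = [set snk] ->
  (forall v, 0 <= c v) ->
  (forall s, (1 <= M s)%N) ->
  complete_path E src snk p ->
  Rt E gamma c M src p (size p) =
    len c p + \sum_(s : S) \sum_(v in ivs E gamma p s) c v / (M s)%:R.
Proof.
move=> Hac Hsrc _ _ _ [rest [Hp [Hpath _]]].
have Hpw : pairwise (connect E) p.
  rewrite -sorted_pairwise; last exact: connect_trans.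
  rewrite Hp /=; apply: sub_path Hpath => a b; exact: connect1.
have Hpar0 := par_src gamma Hac Hsrc.
suff H : forall k, (k < size p)%N -> Rt E gamma c M src p k.+1 =
    len c (take k.+1 p) + \sum_(s : S) \sum_(v in ivs E gamma (take k.+1 p) s) c v / (M s)%:R.
  have Hs : size p = (size p).-1.+1 by rewrite Hp.
  by rewrite Hs H -Hs ?take_size // Hp.
elim=> [|k IH] Hk.
  rewrite /= Hp /= (take0 rest) /len big_cons big_nil addr0.
  rewrite big1 ?addr0 // => s _.
  have -> : ivs E gamma [:: src] s = set0.
    by apply/setP => v; rewrite ivs_P /= orbF Hpar0 in_set0 andbF.
  by rewrite big_set0.
set x := nth src p k.+1.
have Htk : take k.+2 p = rcons (take k.+1 p) x by rewrite (take_nth src).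
rewrite -[Rt _ _ _ _ _ _ k.+2]/(Rt E gamma c M src p k.+1 + c x + \sum_(v in phi E gamma src p k.+1) c v / (M (gamma x))%:R).
rewrite IH ?(ltnW Hk) // Htk.
rewrite (@step R V S E gamma (fun s v => c v / (M s)%:R)).
  rewrite /len -cats1 big_cat big_cons big_nil /phi -/x.
  have E1 : forall a b d e : R, a + b + d + e = a + (d + 0) + (b + e).
    by move=> a b d e; rewrite addr0 -!addrA; congr (_ + _); rewrite addrCA.
  exact: E1.
move=> v y Hyq Hgy Hvy Hvx.
have Hpw' : pairwise (connect E) (rcons (take k.+1 p) x).
  by move: Hpw; rewrite -Htk -{1}(cat_take_drop k.+2 p) pairwise_cat => /and3P [].
case Hl: (last_of_type gamma (take k.+1 p) (gamma x)) => [z|] /=.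
  have [Hzq Hgz] := lot_Some Hl.
  have [Hyz Hzx] := lot_conn Hpw' Hyq Hgy Hl.
  exact: (par_mid Hyz Hzx (etrans Hgy (esym Hgz)) Hvy Hvx).
by move: (lot_None Hl Hyq); rewrite Hgy eqxx.
Qed.
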